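(* Let $G_1,G_2$ be locally compact groups and $M_1,M_2$ locally compact topological spaces. Suppose $G_j$ acts properly on $M_j$ for $j=1,2$, and $G_2$ also acts (not necessarily properly) on $M_1$, commuting with the action of $G_1$. Then the action of $G_1\times G_2$ on $M_1\times M_2$ given by $(g_1,g_2)\cdot(m_1,m_2)=(g_1g_2m_1,g_2m_2)$ is proper.
   Context: An action of a topological group $H$ on a topological space $X$ is proper if for every compact $K\subseteq X$ the set $\{h\in H: hK\cap K\neq\emptyset\}$ is compact. *)

(* Defs.v *)
From HB Require Import structures.
From mathcomp Require Import all_boot all_order all_algebra.
From mathcomp Require Import all_classical all_reals all_analysis.
Set Implicit Arguments. Unset Strict Implicit. Unset Printing Implicit Defensive.
Local Open Scope classical_set_scope.

Definition topological_group (G : topologicalType)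
    (mul : G -> G -> G) (inv : G -> G) (e : G) : Prop :=
  [/\ (forall x y z, mul x (mul y z) = mul (mul x y) z),
      (forall x, mul e x = x /\ mul x e = x),
      (forall x, mul (inv x) x = e /\ mul x (inv x) = e),
      continuous (fun p : G * G => mul p.1 p.2)
    & continuous inv].

Definition locally_compact_space (X : topologicalType) : Prop :=
  hausdorff_space X /\ locally_compact [set: X].

Definition continuous_action (G X : topologicalType)
    (mul : G -> G -> G) (e : G) (act : G -> X -> X) : Prop :=
  [/\ (forall x, act e x = x),
      (forall g h x, act (mul g h) x = act g (act h x))
    & continuous (fun p : G * X => act p.1 p.2)].

Definition proper_action (G X : topologicalType) (act : G -> X -> X) : Prop :=
  forall K : set X, compact K ->
    compact [set h : G | exists2 x, K x & K (act h x)].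

(* Main.v *)
Require Import Defs.
From HB Require Import structures.
From mathcomp Require Import all_boot all_order all_algebra.
From mathcomp Require Import all_classical all_reals all_analysis.
Local Open Scope classical_set_scope.

Lemma hausdorff_prod2 (A B : topologicalType) :
  hausdorff_space A -> hausdorff_space B -> hausdorff_space (A * B)%type.
Proof.
move=> hA hB p q; rewrite cluster_cvgE /= => -[G PG [Gq pG]].
case: p q Gq pG => [p1 p2] [q1 q2] Gq pG.
have f1 : fst @ G --> q1 by apply: cvg_trans (cvg_app fst Gq) _; exact: cvg_fst.
have f2 : snd @ G --> q2 by apply: cvg_trans (cvg_app snd Gq) _; exact: cvg_snd.
have g1 : fst @ G --> p1 by apply: cvg_trans (cvg_app fst pG) _; exact: cvg_fst.
have g2 : snd @ G --> p2 by apply: cvg_trans (cvg_app snd pG) _; exact: cvg_snd.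
congr pair.
- apply: hA; rewrite cluster_cvgE; exists (fst @ G); first exact: fmap_proper_filter.
  by split.
- apply: hB; rewrite cluster_cvgE; exists (snd @ G); first exact: fmap_proper_filter.
  by split.
Qed.

Theorem lemma3p4
  (G1 G2 M1 M2 : topologicalType)
  (mul1 : G1 -> G1 -> G1) (inv1 : G1 -> G1) (e1 : G1)
  (mul2 : G2 -> G2 -> G2) (inv2 : G2 -> G2) (e2 : G2)
  (act1 : G1 -> M1 -> M1) (act2 : G2 -> M2 -> M2) (act21 : G2 -> M1 -> M1)
  (hG1 : topological_group mul1 inv1 e1) (hG2 : topological_group mul2 inv2 e2)
  (lcG1 : locally_compact_space G1) (lcG2 : locally_compact_space G2)
  (lcM1 : locally_compact_space M1) (lcM2 : locally_compact_space M2)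
  (hact1 : continuous_action mul1 e1 act1)
  (hact2 : continuous_action mul2 e2 act2)
  (hact21 : continuous_action mul2 e2 act21)
  (pr1 : proper_action act1) (pr2 : proper_action act2)
  (hcomm : forall g1 g2 m, act21 g2 (act1 g1 m) = act1 g1 (act21 g2 m)) :
  proper_action (fun (g : G1 * G2) (m : M1 * M2) =>
                   (act1 g.1 (act21 g.2 m.1), act2 g.2 m.2)).
Proof.
case: hact1 => _ _ c1; case: hact2 => _ _ c2; case: hact21 => _ _ c21.
set f := fun p : ((G1 * G2) * (M1 * M2))%type =>
  (act1 p.1.1 (act21 p.1.2 p.2.1), act2 p.1.2 p.2.2).
have cf : continuous f.
  move=> x; rewrite /f; apply: cvg_pair.
  - apply: (@continuous2_cvg _ _ _ _ _ _ _ _ act1 x.1.1 (act21 x.1.2 x.2.1)).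
    + exact: (c1 (x.1.1, act21 x.1.2 x.2.1)).
    + by apply: cvg_trans (cvg_app fst (@cvg_fst _ _ _ _ _)) _; exact: cvg_fst.
    + apply: (@continuous2_cvg _ _ _ _ _ _ _ _ act21 x.1.2 x.2.1).
      * exact: (c21 (x.1.2, x.2.1)).
      * by apply: cvg_trans (cvg_app snd (@cvg_fst _ _ _ _ _)) _; exact: cvg_snd.
      * by apply: cvg_trans (cvg_app fst (@cvg_snd _ _ _ _ _)) _; exact: cvg_fst.
  - apply: (@continuous2_cvg _ _ _ _ _ _ _ _ act2 x.1.2 x.2.2).
    + exact: (c2 (x.1.2, x.2.2)).
    + by apply: cvg_trans (cvg_app snd (@cvg_fst _ _ _ _ _)) _; exact: cvg_snd.
    + by apply: cvg_trans (cvg_app snd (@cvg_snd _ _ _ _ _)) _; exact: cvg_snd.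
move=> K cK.
have hM : hausdorff_space (M1 * M2)%type
  by apply: hausdorff_prod2; [case: lcM1|case: lcM2].
have clK : closed K := compact_closed hM cK.
set K1 := fst @` K; set K2 := snd @` K.
have cK1 : compact K1.
  by apply: continuous_compact => //; apply: continuous_subspaceT => x; exact: cvg_fst.
have cK2 : compact K2.
  by apply: continuous_compact => //; apply: continuous_subspaceT => x; exact: cvg_snd.
set C2 := [set h | exists2 x, K2 x & K2 (act2 h x)].
have cC2 : compact C2 := pr2 _ cK2.
set L := (fun p => act21 p.1 p.2) @` (C2 `*` K1).
have cL : compact L.
  apply: continuous_compact; last exact: compact_setX.
  exact: continuous_subspaceT.
set K' := L `|` K1.
have cK' : compact K' := compactU cL cK1.
set C1 := [set h | exists2 x, K' x & K' (act1 h x)].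
have cC1 : compact C1 := pr1 _ cK'.
set T := ((C1 `*` C2) `*` K) `&` (f @^-1` K).
have cT : compact T.
  apply: compact_closedI; first by apply: compact_setX => //; exact: compact_setX.
  by apply: preimage_closed => // x _; exact: cf.
have -> : [set h : G1 * G2 | exists2 x, K x &
    K (act1 h.1 (act21 h.2 x.1), act2 h.2 x.2)] = fst @` T.
  apply/seteqP; split.
  - move=> [g1 g2] [x Kx Kgx] /=.
    exists ((g1, g2), x) => //; split => //; split => //=; split => //=.
    + exists (act21 g2 x.1).
        left; exists (g2, x.1) => //; split => /=.
          by exists x.2; [exists x | exists (act1 g1 (act21 g2 x.1), act2 g2 x.2)].
        by exists x.
      by right; exists (act1 g1 (act21 g2 x.1), act2 g2 x.2).
    + by exists x.2; [exists x | exists (act1 g1 (act21 g2 x.1), act2 g2 x.2)].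
  - by move=> g [[g' x] [[_ Kx] Kgx] <-]; exists x.
apply: continuous_compact => //; apply: continuous_subspaceT => x; exact: cvg_fst.
Qed.
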